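(* Let $R$ be a ring and $\mathbf{M}$ a class of left $R$-modules closed under isomorphism and under arbitrary direct sums. Let $0\to A\to M\to N$ be an exact sequence of left $R$-modules with $M,N\in\mathbf{M}$. Then $A$ is isomorphic to the inverse limit of an inverse system indexed by $\omega_1$ (the first uncountable ordinal) of modules in $\mathbf{M}$ with surjective connecting homomorphisms.
   Context: Rings are associative with unit, modules are unital. *)

(* Defs.v *)
(* Left R-modules are [lmodType R] for a ring [R : pzRingType]
   (associative, unital; the zero ring is allowed). *)
From HB Require Import structures.
From mathcomp Require Import all_boot all_order all_algebra.
Set Implicit Arguments. Unset Strict Implicit. Unset Printing Implicit Defensive.
Import GRing.Theory.
Local Open Scope ring_scope.

Definition countable_type (T : Type) : Prop := exists f : T -> nat, injective f.

(* This characterizes omega_1 up to order isomorphism. *)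
Record is_omega1 (I : Type) (lt : I -> I -> Prop) : Prop := {
  om1_irrefl : forall i, ~ lt i i;
  om1_trans  : forall i j k, lt i j -> lt j k -> lt i k;
  om1_total  : forall i j, lt i j \/ i = j \/ lt j i;
  om1_wf     : well_founded lt;
  om1_uncountable : ~ countable_type I;
  om1_segments : forall i, countable_type {j : I | lt j i}
}.

Definition leq_of (I : Type) (lt : I -> I -> Prop) (i j : I) : Prop :=
  lt i j \/ i = j.

Definition mod_iso (R : pzRingType) (M N : lmodType R) : Prop :=
  exists f : {linear M -> N}, bijective f.

Definition closed_under_iso (R : pzRingType) (P : lmodType R -> Prop) : Prop :=
  forall M N : lmodType R, mod_iso M N -> P M -> P N.

Definition is_direct_sum (R : pzRingType) (J : Type) (F : J -> lmodType R)
    (S : lmodType R) (iota : forall j, {linear F j -> S}) : Prop :=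
  forall (T : lmodType R) (g : forall j, {linear F j -> T}),
    exists h : {linear S -> T},
      (forall j x, h (iota j x) = g j x) /\
      (forall h' : {linear S -> T}, (forall j x, h' (iota j x) = g j x) ->
         forall s, h' s = h s).

Definition closed_under_direct_sums (R : pzRingType) (P : lmodType R -> Prop)
  : Prop :=
  forall (J : Type) (F : J -> lmodType R) (S : lmodType R)
         (iota : forall j, {linear F j -> S}),
    (forall j, P (F j)) -> is_direct_sum iota -> P S.

Definition left_exact (R : pzRingType) (A M N : lmodType R)
    (u : {linear A -> M}) (v : {linear M -> N}) : Prop :=
  injective u /\ (forall m, v m = 0 <-> exists a, u a = m).

(* An inverse system (Mi, f i j : Mj -> Mi for i <= j) over (I, lt).
   Only the maps with i <= j are meaningful. *)
Definition inverse_system (R : pzRingType) (I : Type) (lt : I -> I -> Prop)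
    (Mi : I -> lmodType R) (f : forall i j : I, {linear Mi j -> Mi i}) : Prop :=
  (forall i x, f i i x = x) /\
  (forall i j k, leq_of lt i j -> leq_of lt j k ->
     forall x, f i j (f j k x) = f i k x).

Definition surjective_connecting (R : pzRingType) (I : Type)
    (lt : I -> I -> Prop) (Mi : I -> lmodType R)
    (f : forall i j : I, {linear Mi j -> Mi i}) : Prop :=
  forall i j, leq_of lt i j -> forall y : Mi i, exists x : Mi j, f i j x = y.

(* (A, p) is (isomorphic to) the inverse limit of the system: the canonical map
   a |-> (p i a)_i is a bijection from A onto the module of threads
   {x in prod_i Mi | f i j (x j) = x i for i <= j}, and the p i are compatible. *)
Definition is_inverse_limit (R : pzRingType) (I : Type) (lt : I -> I -> Prop)
    (Mi : I -> lmodType R) (f : forall i j : I, {linear Mi j -> Mi i})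
    (A : lmodType R) (p : forall i, {linear A -> Mi i}) : Prop :=
  (forall i j, leq_of lt i j -> forall a, f i j (p j a) = p i a) /\
  (forall a b, (forall i, p i a = p i b) -> a = b) /\
  (forall x : forall i, Mi i,
     (forall i j, leq_of lt i j -> f i j (x j) = x i) ->
     exists a, forall i, p i a = x i).

(* Main.v *)
Require Import Defs.
From HB Require Import structures.
From mathcomp Require Import all_boot all_order all_algebra.
From mathcomp Require Import boolp functions.

Set Implicit Arguments. Unset Strict Implicit. Unset Printing Implicit Defensive.
Import GRing.Theory.
Local Open Scope ring_scope.

Section Cover.
Variables (S : choiceType).
Definition cover (V : zmodType) (y : S -> V) (l : seq S) := forall s, y s != 0 -> s \in l.
Definition fs (V : zmodType) (y : S -> V) := exists l, cover y l.
Definition supp (V : zmodType) (y : S -> V) : seq S :=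
  match pselect (fs y) with left H => undup (projT1 (cid H)) | right _ => [::] end.
Lemma supp_uniq (V : zmodType) (y : S -> V) : uniq (supp y).
Proof. rewrite /supp; case: pselect => // H; exact: undup_uniq. Qed.
Lemma supp_cover (V : zmodType) (y : S -> V) : fs y -> cover y (supp y).
Proof.
rewrite /supp; case: pselect => // H _ s /(projT2 (cid H)).
by rewrite mem_undup.
Qed.

Lemma big_cover (T : zmodType) (G : S -> T) l1 l2 : uniq l1 -> uniq l2 ->
  cover G l1 -> cover G l2 -> \sum_(s <- l1) G s = \sum_(s <- l2) G s.
Proof.
move=> u1 u2 c1 c2.
have E l : \sum_(s <- l) G s = \sum_(s <- l | G s != 0) G s.
  rewrite (bigID (fun s => G s == 0)) /= big1 ?add0r //; by move=> s /eqP.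
rewrite E [RHS]E.
rewrite -(big_filter l1) -(big_filter l2); apply: perm_big; apply: uniq_perm; rewrite ?filter_uniq //.
move=> s; rewrite !mem_filter; have [//|H] := eqVneq (G s) 0.
by rewrite /= (c1 _ H) (c2 _ H).
Qed.

Lemma sum_any (V T : zmodType) (y : S -> V) (F : S -> T) l : fs y -> uniq l ->
  cover y l -> (forall s, y s = 0 -> F s = 0) ->
  \sum_(s <- supp y) F s = \sum_(s <- l) F s.
Proof.
move=> fy ul cl F0; apply: big_cover => //; first exact: supp_uniq.
  move=> s Fs; apply: (supp_cover fy); apply: contra Fs => /eqP /F0 ->.
  by rewrite eqxx.
move=> s Fs; apply: cl; apply: contra Fs => /eqP /F0 ->.
by rewrite eqxx.
Qed.

Lemma big_pred1_useq (T : zmodType) (r : seq S) x (F : S -> T) : uniq r ->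
  \sum_(s <- r | s == x) F s = if x \in r then F x else 0.
Proof.
move=> ur; case: ifP => xr.
  by rewrite -big_filter (filter_pred1_uniq ur xr) big_seq1.
rewrite big1_seq // => s /andP[/eqP -> H]; by rewrite H in xr.
Qed.
End Cover.

Section Push.
Variables (S S' : choiceType) (V : zmodType).
Definition push (phi : S -> S') (y : S -> V) : S' -> V :=
  fun t => \sum_(s <- supp y | phi s == t) y s.

Lemma push_l phi y l t : fs y -> uniq l -> cover y l ->
  push phi y t = \sum_(s <- l | phi s == t) y s.
Proof.
move=> fy ul cl; rewrite /push !(big_mkcond (fun s => phi s == t)).
apply: sum_any => // s ->; by case: ifP.
Qed.

Lemma pushP phi y t : push phi y t != 0 -> exists s, phi s = t /\ y s != 0.
Proof.
move=> H; case: (pselect (exists s, phi s = t /\ y s != 0)) => // H'.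
exfalso; move/eqP: H; apply; rewrite /push big1 // => s /eqP E.
case: (eqVneq (y s) 0) => // ys; exfalso; apply: H'; by exists s.
Qed.

Lemma fs_push phi y : fs y -> fs (push phi y).
Proof.
move=> fy; exists (map phi (supp y)) => t /pushP [s [<- ys]].
by apply: map_f; apply: supp_cover.
Qed.

Lemma push_ext phi psi y : (forall s, phi s = psi s) -> push phi y = push psi y.
Proof. move=> E; apply: funext => t; rewrite /push; apply: eq_bigl => s; by rewrite E. Qed.

Lemma push_inj phi y s : injective phi -> fs y -> push phi y (phi s) = y s.
Proof.
move=> iphi fy; rewrite /push (eq_bigl (fun x => x == s)); last by move=> x; rewrite inj_eq.
rewrite big_pred1_useq ?supp_uniq //; case: ifP => // H.
apply/eqP; apply: contraFT H; rewrite eq_sym => ys; exact: (supp_cover fy).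
Qed.
End Push.

Lemma push_comp (S S' S'' : choiceType) (V : zmodType) (phi : S -> S') (psi : S' -> S'')
  (y : S -> V) : fs y -> push psi (push phi y) = push (psi \o phi) y.
Proof.
move=> fy; apply: funext => u.
have fpy := fs_push phi fy.
have cL : cover (push phi y) (undup (map phi (supp y))).
  move=> t /pushP [s [<- ys]]; rewrite mem_undup; apply: map_f; exact: supp_cover.
rewrite (push_l _ _ fpy (undup_uniq _) cL).
rewrite (push_l _ _ fy (supp_uniq y) (supp_cover fy)).
rewrite (eq_bigr (fun t => \sum_(s <- supp y | phi s == t) y s)); last first.
  move=> t _; exact: (push_l _ _ fy (supp_uniq y) (supp_cover fy)).
rewrite (exchange_big_dep (fun s => psi (phi s) == u)) /=; last by move=> t s /eqP <- /eqP ->.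
rewrite big_seq_cond [RHS]big_seq_cond; apply: eq_bigr => s /andP[sl pu].
rewrite (eq_bigl (fun t => t == phi s)); last first.
  by move=> t; apply/andP/eqP => [[_ /eqP <-]|->]; rewrite // eqxx.
by rewrite big_pred1_useq ?undup_uniq // mem_undup map_f.
Qed.

Section PushLin.
Variables (R : pzRingType) (N : lmodType R) (S S' : choiceType).
Lemma fctDZ (X : Type) (a : R) (y1 y2 : X -> N) s : (a *: y1 + y2) s = a *: y1 s + y2 s.
Proof. by []. Qed.
Lemma fct0 (X : Type) s : (0 : X -> N) s = 0.
Proof. by []. Qed.
Lemma fsD (a : R) (y1 y2 : S -> N) : fs y1 -> fs y2 -> fs (a *: y1 + y2).
Proof.
move=> f1 f2; exists (supp y1 ++ supp y2) => s; rewrite mem_cat.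
apply: contraR => /norP [H1 H2].
have e1 : y1 s = 0 by apply/eqP; apply: contraNT H1 => /(supp_cover f1).
have e2 : y2 s = 0 by apply/eqP; apply: contraNT H2 => /(supp_cover f2).
by rewrite fctDZ e1 e2 scaler0 addr0.
Qed.

Lemma fs0 : fs (0 : S -> N).
Proof. by exists [::] => s; rewrite fct0 eqxx. Qed.

Lemma pushD (phi : S -> S') (a : R) (y1 y2 : S -> N) : fs y1 -> fs y2 ->
  push phi (a *: y1 + y2) = a *: push phi y1 + push phi y2.
Proof.
move=> f1 f2; apply: funext => t.
set l := undup (supp y1 ++ supp y2).
have c1 : cover y1 l by move=> s /(supp_cover f1); rewrite mem_undup mem_cat => ->.
have c2 : cover y2 l by move=> s /(supp_cover f2); rewrite mem_undup mem_cat orbC => ->.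
have c3 : cover (a *: y1 + y2) l.
  move=> s H; apply: contraR H => H; rewrite /=.
  have e1 : y1 s = 0 by apply/eqP; apply: contraNT H => /c1.
  have e2 : y2 s = 0 by apply/eqP; apply: contraNT H => /c2.
  by rewrite fctDZ e1 e2 scaler0 addr0.
rewrite fctDZ (push_l _ _ f1 (undup_uniq _) c1) (push_l _ _ f2 (undup_uniq _) c2).
rewrite (push_l _ _ (fsD a f1 f2) (undup_uniq _) c3).
by rewrite scaler_sumr -big_split.
Qed.

Lemma push0 (phi : S -> S') : push phi (0 : S -> N) = 0.
Proof. apply: funext => t; rewrite /push big1 //. Qed.
End PushLin.

Definition ssum (S : choiceType) (V : zmodType) (y : S -> V) := \sum_(s <- supp y) y s.

Lemma ssumE (S : choiceType) (V : zmodType) (y : S -> V) :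
  ssum y = push (fun _ => tt) y tt.
Proof. by rewrite /ssum /push. Qed.

Lemma ssum_push (S S' : choiceType) (V : zmodType) (phi : S -> S') (y : S -> V) :
  fs y -> ssum (push phi y) = ssum y.
Proof. by move=> fy; rewrite !ssumE push_comp. Qed.

Set Implicit Arguments. Unset Strict Implicit. Unset Printing Implicit Defensive.
Import GRing.Theory.
Local Open Scope ring_scope.

Definition mkLin (R : pzRingType) (U V : lmodType R) (f : U -> V) (H : linear f) : {linear U -> V} :=
  HB.pack f (GRing.isLinear.Build _ _ _ _ f H).

Lemma ssum_cover (S : choiceType) (V : zmodType) (y : S -> V) l :
  fs y -> uniq l -> cover y l -> ssum y = \sum_(s <- l) y s.
Proof. by move=> fy ul cl; rewrite /ssum (sum_any (F := y) fy ul cl). Qed.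

Lemma ssumD (R : pzRingType) (N : lmodType R) (S : choiceType) a (y1 y2 : S -> N) :
  fs y1 -> fs y2 -> ssum (a *: y1 + y2) = a *: ssum y1 + ssum y2.
Proof. by move=> f1 f2; rewrite !ssumE pushD. Qed.

Lemma ssum0 (R : pzRingType) (N : lmodType R) (S : choiceType) : ssum (0 : S -> N) = 0.
Proof. by rewrite ssumE push0. Qed.

Section WDef.
Variables (R : pzRingType) (M N : lmodType R) (v : {linear M -> N}) (S : choiceType).
Definition Wpred : {pred (M * (S -> N))%type} :=
  fun x => `[< fs x.2 /\ ssum x.2 = v x.1 >].
Lemma Wpred_closed : submod_closed Wpred.
Proof.
split.
  apply/asboolP; split; first exact: fs0.
  by rewrite ssum0 /= linear0.
move=> a x y /asboolP[fx sx] /asboolP[fy sy]; apply/asboolP; split.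
  exact: fsD.
by rewrite /= ssumD // sx sy linearP.
Qed.
HB.instance Definition _ := GRing.isSubmodClosed.Build R (M * (S -> N))%type Wpred Wpred_closed.
Definition W := {x : M * (S -> N) | x \in Wpred}.
HB.instance Definition _ := [isSub of W for (@sval _ (fun x => x \in Wpred))].
HB.instance Definition _ := [Choice of W by <:].
HB.instance Definition _ := [SubChoice_isSubLmodule of W by <:].

Definition mkW x (H : x \in Wpred) : W := exist (fun x => x \in Wpred) x H.
Lemma Wfs (w : W) : fs (val w).2.
Proof. by case: w => x /= /asboolP[]. Qed.
Lemma Wss (w : W) : ssum (val w).2 = v (val w).1.
Proof. by case: w => x /= /asboolP[]. Qed.
End WDef.

Section MapW.
Variables (R : pzRingType) (M N : lmodType R) (v : {linear M -> N}) (S S' : choiceType).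
Variable phi : S -> S'.
Lemma mapW_proof (w : W v S) : ((val w).1, push phi (val w).2) \in @Wpred _ _ _ v S'.
Proof.
apply/asboolP; split; first exact: fs_push (Wfs w).
rewrite /= ssum_push; [exact: Wss | exact: Wfs].
Qed.
Definition mapW_fun (w : W v S) : W v S' := mkW (mapW_proof w).
Lemma mapW_lin : linear mapW_fun.
Proof.
move=> a w1 w2; apply: val_inj => /=.
by rewrite pushD //; apply: Wfs.
Qed.
Definition mapW : {linear W v S -> W v S'} := mkLin mapW_lin.
Lemma mapWE w : val (mapW w) = ((val w).1, push phi (val w).2).
Proof. by []. Qed.
End MapW.

Set Implicit Arguments. Unset Strict Implicit. Unset Printing Implicit Defensive.
Import GRing.Theory.
Local Open Scope ring_scope.

Lemma fstD (A B : zmodType) (x y : (A * B)%type) : (x + y).1 = x.1 + y.1. Proof. by []. Qed.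
Lemma sndD (A B : zmodType) (x y : (A * B)%type) : (x + y).2 = x.2 + y.2. Proof. by []. Qed.
Lemma sum_fst (X : Type) (A B : zmodType) (r : seq X) (F : X -> (A * B)%type) :
  (\sum_(i <- r) F i).1 = \sum_(i <- r) (F i).1.
Proof. by elim: r => [|x r IH]; rewrite ?big_nil // !big_cons fstD IH. Qed.
Lemma sum_snd (X : Type) (A B : zmodType) (r : seq X) (F : X -> (A * B)%type) :
  (\sum_(i <- r) F i).2 = \sum_(i <- r) (F i).2.
Proof. by elim: r => [|x r IH]; rewrite ?big_nil // !big_cons sndD IH. Qed.
Lemma sum_app (X Y : Type) (A : zmodType) (r : seq X) (F : X -> Y -> A) t :
  (\sum_(i <- r) F i) t = \sum_(i <- r) F i t.
Proof. by elim: r => [|x r IH]; rewrite ?big_nil // !big_cons -IH. Qed.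
Lemma fctD (X : Type) (A : zmodType) (f g : X -> A) t : (f + g) t = f t + g t.
Proof. by []. Qed.

Lemma pairZD (R : pzRingType) (A B : lmodType R) a (x y : (A * B)%type) :
  a *: x + y = (a *: x.1 + y.1, a *: x.2 + y.2).
Proof. by case: x; case: y. Qed.

Section DS.
Variables (R : pzRingType) (M N : lmodType R) (v : {linear M -> N}) (S : choiceType) (p : S).

Lemma valWD (x y : W v S) : val (x + y) = val x + val y. Proof. by []. Qed.
Lemma valW_sum (X : Type) (r : seq X) (F : X -> W v S) :
  val (\sum_(i <- r) F i) = \sum_(i <- r) val (F i).
Proof. by elim: r => [|x r IH]; rewrite ?big_nil // !big_cons valWD IH. Qed.

Definition delta (q : S) (n : N) : S -> N := fun s => if s == q then n else 0.
Lemma fs_delta q n : fs (delta q n).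
Proof. by exists [:: q] => s; rewrite /delta mem_seq1; case: (s == q); rewrite ?eqxx. Qed.
Lemma ssum_delta q n : ssum (delta q n) = n.
Proof.
rewrite (@ssum_cover _ _ _ [:: q]) ?big_seq1 /delta ?eqxx //; first exact: fs_delta.
by move=> s; rewrite /delta mem_seq1; case: (s == q); rewrite ?eqxx.
Qed.

Lemma iotaN_proof m : (m, delta p (v m)) \in @Wpred _ _ _ v S.
Proof. apply/asboolP; split; [exact: fs_delta | exact: ssum_delta]. Qed.
Definition iotaN_fun m : W v S := mkW (iotaN_proof m).
Lemma iotaN_lin : linear iotaN_fun.
Proof.
move=> a m1 m2; apply: val_inj => /=.
rewrite linearP; congr pair; apply: funext => s; rewrite /delta fctDZ.
by rewrite /=; case: (s == p); rewrite ?scaler0 ?addr0.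
Qed.
Definition iotaN : {linear M -> W v S} := mkLin iotaN_lin.

Lemma iotaS_proof q n : (0, (-1) *: delta p n + delta q n) \in @Wpred _ _ _ v S.
Proof.
apply/asboolP; split; first by apply: fsD; apply: fs_delta.
by rewrite /= ssumD ?ssum_delta ?scaleN1r ?addNr ?linear0 //; exact: fs_delta.
Qed.
Definition iotaS_fun q n : W v S := mkW (iotaS_proof q n).
Lemma iotaS_lin q : linear (iotaS_fun q).
Proof.
move=> a n1 n2; apply: val_inj => /=; rewrite pairZD /=.
rewrite scaler0 addr0; congr pair; apply: funext => s; rewrite /delta !fctDZ.
case: (s == p); case: (s == q); rewrite ?scaler0 ?addr0 ?add0r ?scaleN1r //.
- by rewrite !addNr scaler0 addr0.
- by rewrite scalerN opprD.
- by rewrite scaler0.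
Qed.
Definition iotaS q : {linear N -> W v S} := mkLin (iotaS_lin q).

Definition Fam (j : option {s : S | s <> p}) : lmodType R :=
  match j with None => M | Some _ => N end.
Definition iotaW (j : option {s : S | s <> p}) : {linear Fam j -> W v S} :=
  match j as j0 return {linear Fam j0 -> W v S} with
  | None => iotaN | Some t => iotaS (sval t) end.

Lemma iotaSp n : iotaS p n = 0.
Proof.
apply: val_inj => /=; congr pair; apply: funext => s; rewrite fctDZ scaleN1r.
by rewrite addNr.
Qed.

Lemma decompW (w : W v S) :
  w = iotaN (val w).1 + \sum_(s <- supp (val w).2) iotaS s ((val w).2 s).
Proof.
apply: val_inj; rewrite valWD valW_sum.
have fy := Wfs w; have sy := Wss w.
move: fy sy; case: (val w) => m y /= fy sy.
congr pair.
  by rewrite sum_fst big1 ?addr0.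
apply: funext => t; rewrite fctD sum_snd sum_app /=.
rewrite (eq_bigr (fun s => - (if t == p then y s else 0) + (if t == s then y s else 0))); last first.
  by move=> s _; rewrite fctDZ /delta scaleN1r.
rewrite big_split /= sumrN.
have -> : \sum_(s <- supp y) (if t == s then y s else 0) = y t.
  rewrite -big_mkcond /= (eq_bigl (fun s => s == t)); last by move=> s; rewrite eq_sym.
  rewrite big_pred1_useq ?supp_uniq //; case: ifP => // H.
  apply/eqP; apply: contraFT H; rewrite eq_sym => ys; exact: (supp_cover fy).
rewrite /delta; case: eqP => _; last by rewrite big1 ?oppr0 ?add0r.

by rewrite -/(ssum y) sy addrA addrN add0r.
Qed.

Theorem W_ds : is_direct_sum iotaW.
Proof.
move=> T g.
pose G (s : S) (n : N) : T := match pselect (s <> p) with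
  | left H => g (Some (exist _ s H)) n | right _ => 0 end.
have G0 s : G s 0 = 0 by rewrite /G; case: pselect => // H; rewrite linear0.
have Glin s a x y : G s (a *: x + y) = a *: G s x + G s y.
  by rewrite /G; case: pselect => H; rewrite ?linearP // scaler0 addr0.
pose hf (w : W v S) := g None (val w).1 + \sum_(s <- supp (val w).2) G s ((val w).2 s).
have hlin : linear hf.
  move=> a w1 w2; rewrite /hf.
  set l := undup (supp (val w1).2 ++ supp (val w2).2).
  have f1 := Wfs w1; have f2 := Wfs w2.
  have c1 : cover (val w1).2 l by move=> s /(supp_cover f1); rewrite mem_undup mem_cat => ->.
  have c2 : cover (val w2).2 l by move=> s /(supp_cover f2); rewrite mem_undup mem_cat orbC => ->.
  have c3 : cover (val (a *: w1 + w2)).2 l.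
    move=> s H; apply: contraR H => H /=.
    have e1 : (val w1).2 s = 0 by apply/eqP; apply: contraNT H => /c1.
    have e2 : (val w2).2 s = 0 by apply/eqP; apply: contraNT H => /c2.
    by rewrite fctDZ e1 e2 scaler0 addr0.
  rewrite (sum_any _ (undup_uniq _) c1) // ?(sum_any _ (undup_uniq _) c2) //;
    try by move=> s ->.
  rewrite (sum_any (Wfs (a *: w1 + w2)) (undup_uniq _) c3); last by move=> s ->.
  have -> : \sum_(s <- l) G s ((val (a *: w1 + w2)).2 s) =
     a *: \sum_(s <- l) G s ((val w1).2 s) + \sum_(s <- l) G s ((val w2).2 s).
    by rewrite scaler_sumr -big_split; apply: eq_bigr => s _; rewrite /= fctDZ Glin.
  by rewrite /= linearP scalerDr addrACA.
exists (mkLin hlin); split.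
  have Gp n : G p n = 0 by rewrite /G; case: pselect.
  case => [[q Hq]|] x /=.
    rewrite /hf /= linear0 add0r.
    have Hq' : q != p by apply/eqP.
    have fy : fs (-1 *: delta p x + delta q x) by apply: fsD; apply: fs_delta.
    have uq : uniq [:: q; p] by rewrite /= inE Hq'.
    have cy : cover (-1 *: delta p x + delta q x) [:: q; p].
      move=> s; rewrite fctDZ /delta !inE; case: (s == p); case: (s == q);
        by rewrite ?orbT //= scaler0 addr0 eqxx.
    rewrite (sum_any fy uq cy); last by move=> s ->; apply: G0.
    rewrite big_cons big_seq1 Gp addr0 fctDZ /delta eqxx (negbTE Hq') scaler0 add0r.
    by rewrite /G; case: pselect => // H; rewrite (Prop_irrelevance H Hq).
  rewrite /hf /=.
  have cy : cover (delta p (v x)) [:: p].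
    by move=> s; rewrite /delta inE; case: (s == p); rewrite ?eqxx.
  rewrite (sum_any (fs_delta p (v x)) _ cy) //; last by move=> s ->; apply: G0.
  by rewrite big_seq1 Gp addr0.
move=> h' H w.
have HN m : h' (iotaN m) = g None m := H None m.
rewrite [in LHS](decompW w) linearD linear_sum HN /=.
rewrite /= /hf; congr (_ + _); apply: eq_bigr => s _.
rewrite /G; case: pselect => Hs.
  exact: (H (Some (exist _ s Hs))).
have -> : s = p by apply: contra_notP Hs.
by rewrite (iotaSp ((val w).2 p) : iotaS_fun p _ = 0) linear0.
Qed.
End DS.

Set Implicit Arguments. Unset Strict Implicit. Unset Printing Implicit Defensive.
Import GRing.Theory.
Local Open Scope ring_scope.

Section Om.
Variables (I : Type) (lt : I -> I -> Prop) (Hom1 : is_omega1 lt).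
Local Notation leq := (leq_of lt).

Lemma lt_leq_trans a b c : lt a b -> leq b c -> lt a c.
Proof. by move=> H [H'|<-] //; exact: (om1_trans Hom1 H H'). Qed.
Lemma leq_trans' a b c : leq a b -> leq b c -> leq a c.
Proof. by move=> [H|<-] // H'; left; exact: lt_leq_trans H H'. Qed.

Definition inS (i : I) (f : I -> nat) : Prop :=
  (forall b, ~ lt b i -> f b = 0) /\
  (forall k, exists l : seq {classic I}, forall b, lt b i -> f b = k -> (b : {classic I}) \in l).
Definition Sset (i : I) := {classic {f : I -> nat | inS i f}}.
HB.instance Definition _ (i : I) := Choice.on (Sset i).

Definition res (i : I) (f : I -> nat) : I -> nat := fun b => if `[< lt b i >] then f b else 0.

Lemma res_in i j f : leq i j -> inS j f -> inS i (res i f).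
Proof.
move=> Hij [Hout Hfib]; split.
  by move=> b nb; rewrite /res asboolF.
move=> k; have [l Hl] := Hfib k; exists l => b bi; rewrite /res asboolT // => fk.
by apply: Hl => //; exact: lt_leq_trans bi Hij.
Qed.

Lemma Sset_inj i (x y : Sset i) : sval x = sval y -> x = y.
Proof.
move: x y => [x Hx] [y Hy] /= E; subst y; congr exist; exact: Prop_irrelevance.
Qed.

Lemma fib_one (j : I) (h : {b | lt b j} -> nat) : injective h -> forall k,
  exists l : seq {classic I}, forall b (H : lt b j), h (exist _ b H) = k -> (b : {classic I}) \in l.
Proof.
move=> hi k; case: (pselect (exists b H, h (exist (fun b => lt b j) b H) = k)) => [[b0 [H0 E0]]|NE].
  exists [:: b0] => b H E; rewrite inE; apply/eqP.
  by have := hi _ _ (etrans E (esym E0)) => /(congr1 sval).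
by exists [::] => b H E; exfalso; apply: NE; exists b, H.
Qed.

Lemma base_ex i : exists g : Sset i, True.
Proof.
have [h hinj] := om1_segments Hom1 i.
pose f b := match pselect (lt b i) with left H => h (exist _ b H) | right _ => 0%N end.
have Hf : inS i f.
  split; first by move=> b nb; rewrite /f; case: pselect.
  move=> k; have [l Hl] := fib_one hinj k; exists l => b bi; rewrite /f.
  by case: pselect => // H; exact: Hl.
by exists (exist _ f Hf : Sset i).
Qed.
Definition base i : Sset i := projT1 (cid (base_ex i)).

Definition pi i j (g : Sset j) : Sset i :=
  match pselect (leq i j) with
  | left H => (exist _ (res i (sval g)) (res_in H (svalP g)) : Sset i)
  | right _ => base i end.
Arguments pi : clear implicits.

Lemma val_pi i j g : leq i j -> sval (pi i j g) = res i (sval g).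
Proof. by move=> H; rewrite /pi; case: pselect. Qed.

Lemma pi_comp i j k g : leq i j -> leq j k -> pi i j (pi j k g) = pi i k g.
Proof.
move=> Hij Hjk; apply: Sset_inj; rewrite !val_pi //; last exact: leq_trans' Hij Hjk.
apply: funext => b; rewrite /res; case: asboolP => // Hb.
by rewrite asboolT //; exact: lt_leq_trans Hb Hij.
Qed.

Lemma pi_id i g : pi i i g = g.
Proof.
apply: Sset_inj; rewrite val_pi; last by right.
apply: funext => b; rewrite /res; case: asboolP => // Hb.
by rewrite ((svalP g).1 b Hb).
Qed.

Lemma ext_ex i j (g : Sset i) : leq i j -> exists g' : Sset j, pi i j g' = g.
Proof.
move=> Hij; have [h hinj] := om1_segments Hom1 j.
pose f b := match pselect (lt b j) with
  | left H => if `[< lt b i >] then sval g b else h (exist _ b H) | right _ => 0%N end.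
have Hf : inS j f.
  split; first by move=> b nb; rewrite /f; case: pselect.
  move=> k; have [l1 Hl1] := (svalP g).2 k; have [l2 Hl2] := fib_one hinj k.
  exists (l1 ++ l2) => b bj; rewrite /f mem_cat.
  case: pselect => // H; case: asboolP => Hbi E.
    by rewrite (Hl1 _ Hbi E).
  by rewrite (Hl2 _ _ E) orbT.
exists (exist _ f Hf : Sset j); apply: Sset_inj; rewrite val_pi //=.
apply: funext => b; rewrite /res /f; case: asboolP => Hbi.
  case: pselect => [H|nH]; first by [].
  by exfalso; apply: nH; exact: lt_leq_trans Hbi Hij.
by rewrite ((svalP g).1 b Hbi).
Qed.

Lemma exists_gt b : exists j, lt b j.
Proof.
case: (pselect (exists j, lt b j)) => // H; exfalso; apply: (om1_uncountable Hom1).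
have [h hinj] := om1_segments Hom1 b.
exists (fun j => match pselect (lt j b) with left H => (h (exist _ j H)).+1 | right _ => 0%N end).
have Eb j : ~ lt j b -> j = b.
  move=> nj; case: (om1_total Hom1 j b) => [//|[//|H']].
  by exfalso; apply: H; exists j.
move=> j1 j2; case: pselect => [H1|N1]; case: pselect => [H2|N2] //.
  by move=> [] /hinj /(congr1 sval).
by rewrite (Eb _ N1) (Eb _ N2).
Qed.

Lemma exists_above b i0 : exists J, lt b J /\ leq i0 J.
Proof.
have [j Hj] := exists_gt b.
case: (om1_total Hom1 j i0) => [H|[E|H]].
- by exists i0; split; [exact: (om1_trans Hom1 Hj H) | right].
- by exists j; split; [| right].
- by exists j; split; [| left].
Qed.

Lemma inhabI : exists i : I, True.
Proof.
case: (pselect (exists i : I, True)) => // H; exfalso; apply: (om1_uncountable Hom1).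
by exists (fun _ => 0%N) => x; exfalso; apply: H; exists x.
Qed.

Unset Implicit Arguments.
Section Thread.
Variables (R : pzRingType) (N : lmodType R) (y : forall i, Sset i -> N).
Hypothesis fsy : forall i, fs (y i).
Hypothesis thr : forall i j, leq i j -> push (pi i j) (y j) = y i.

Lemma thread_zero i0 : y i0 = 0.
Proof.
apply: funext => s0; apply/eqP; apply: contraT => ys0.
suff : False by [].
apply: (om1_uncountable Hom1).
pose key (j : I) (b : I) (f : Sset j) : (nat * (I -> nat))%type := (sval f b, res i0 (sval f)).
have C1 b i j : leq i0 i -> leq i j -> lt b i -> push (key i b) (y i) = push (key j b) (y j).
  move=> H0 Hij Hb; rewrite -(thr _ _ Hij) push_comp //; apply: push_ext => f /=.
  rewrite /key val_pi // /res; congr pair; first by rewrite asboolT.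
  apply: funext => c; case: asboolP => // Hc; rewrite asboolT //; exact: lt_leq_trans Hc H0.
have C2 b j : leq i0 j -> push snd (push (key j b) (y j)) (sval s0) = y i0 s0.
  move=> H0; rewrite push_comp //.
  rewrite (push_ext (psi := fun f => sval (pi i0 j f))); last by move=> f; rewrite /= val_pi.
  rewrite -(push_comp (pi i0 j) (fun f : Sset i0 => sval f)) // thr //.
  by apply: push_inj => // x1 x2; apply: Sset_inj.
pose J b := projT1 (cid (exists_above b i0)).
have HJ b : lt b (J b) /\ leq i0 (J b) := projT2 (cid (exists_above b i0)).
pose Z b := push (key (J b) b) (y (J b)).
have Zex b : exists k, Z b (k, sval s0) != 0.
  have : push snd (Z b) (sval s0) != 0 by rewrite C2 //; exact: (HJ b).2.
  by case/pushP => [[k r] [/= -> Hz]]; exists k.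
pose g b := projT1 (cid (Zex b)).
have Hg b : Z b (g b, sval s0) != 0 := projT2 (cid (Zex b)).
have D b b' : lt b' b -> exists f : Sset (J b), y (J b) f != 0 /\ sval f b' = g b'.
  move=> Hb'; have HJb : lt b' (J b) by exact: (om1_trans Hom1 Hb' (HJ b).1).
  have E : Z b' = push (key (J b) b') (y (J b)).
    rewrite /Z; case: (om1_total Hom1 (J b') (J b)) => [H|[H|H]].
    - by apply: C1 => //; [exact: (HJ b').2 | left | exact: (HJ b').1].
    - by rewrite H.
    - by symmetry; apply: C1 => //; [exact: (HJ b).2 | left].
  have := Hg b'; rewrite E => /pushP [f [Ef Hf]]; exists f; split => //.
  by case: Ef.
pose fibl j (f : Sset j) k : seq {classic I} := projT1 (cid ((svalP f).2 k)).
have Hfibl j (f : Sset j) k b : lt b j -> sval f b = k -> (b : {classic I}) \in fibl j f k.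
  exact: (projT2 (cid ((svalP f).2 k))).
pose L b := flatten [seq fibl (J b) f (g b) | f <- supp (y (J b))].
pose T b := undup (filter (fun c : {classic I} => `[< lt c b >] && (g c == g b)) (L b)).

have HT1 b c : (c : {classic I}) \in T b -> lt c b /\ g c = g b.
  by rewrite mem_undup mem_filter => /andP [/andP [/asboolP H /eqP E] _].
have HT2 b c : lt c b -> g c = g b -> (c : {classic I}) \in T b.
  move=> Hc Eg; rewrite mem_undup mem_filter asboolT // Eg eqxx /=.
  have [f [Hf Ef]] := D b c Hc.
  apply/flatten_mapP; exists f; first exact: (supp_cover (fsy _)).
  by apply: Hfibl; [exact: (om1_trans Hom1 Hc (HJ b).1) | rewrite Ef Eg].
pose c b := size (T b).
have Hcon b1 b2 : lt b1 b2 -> g b1 = g b2 -> c b1 = c b2 -> False.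
  move=> H12 Eg Ec.
  have : (size ((b1 : {classic I}) :: T b1) <= size (T b2))%N.
    apply: uniq_leq_size.
      rewrite /= undup_uniq andbT; apply/negP => /HT1 [H _].
      exact: (om1_irrefl Hom1 H).
    move=> x; rewrite inE => /orP [/eqP ->|/HT1 [Hx Egx]]; apply: HT2 => //.
      exact: (om1_trans Hom1 Hx H12).
    by rewrite Egx.
  by rewrite /= -/(c b1) Ec ltnn.
exists (fun b => pickle (g b, c b)) => b1 b2 /(pcan_inj pickleK_inv) [Eg Ec].
case: (om1_total Hom1 b1 b2) => [H|[//|H]]; exfalso.
  exact: Hcon _ _ H Eg Ec.
exact: Hcon _ _ H (esym Eg) (esym Ec).
Qed.
End Thread.
End Om.

Set Implicit Arguments. Unset Strict Implicit. Unset Printing Implicit Defensive.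
Import GRing.Theory.
Local Open Scope ring_scope.

Lemma push_id (S : choiceType) (V : zmodType) (y : S -> V) : fs y -> push (fun s => s) y = y.
Proof. by move=> fy; apply: funext => t; exact: (@push_inj _ _ _ (fun s => s) y t). Qed.

Unset Implicit Arguments.
Theorem corollary8 (R : pzRingType) (P : lmodType R -> Prop)
  (HPiso : closed_under_iso P) (HPsum : closed_under_direct_sums P)
  (A M N : lmodType R) (u : {linear A -> M}) (v : {linear M -> N})
  (Hex : left_exact u v) (HM : P M) (HN : P N)
  (I : Type) (lt : I -> I -> Prop) (Hom1 : is_omega1 lt) :
  exists (Mi : I -> lmodType R) (f : forall i j : I, {linear Mi j -> Mi i})
         (p : forall i, {linear A -> Mi i}),
    (forall i, P (Mi i)) /\ inverse_system lt f /\
    surjective_connecting lt f /\ is_inverse_limit lt f p.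
Proof.
have [i00 _] := inhabI Hom1.
pose Mi := fun i => (W v (Sset lt i) : lmodType R).
pose f := fun i j => (mapW v (@pi _ _ Hom1 i j) : {linear Mi j -> Mi i}).
have pA i a : (u a, 0) \in @Wpred _ _ _ v (Sset lt i).
  apply/asboolP; split; first exact: fs0.
  rewrite ssum0 /=; apply/esym/(proj2 Hex); by exists a.
pose pf i a : Mi i := mkW (pA i a).
have plin i : linear (pf i).
  move=> a x y; apply: val_inj => /=; rewrite pairZD /= linearP.
  by rewrite scaler0 addr0.
pose p := fun i => (mkLin (plin i) : {linear A -> Mi i}).
exists Mi, f, p; split.
  move=> i; apply: (HPsum _ _ _ (@iotaW _ _ _ v _ (base Hom1 i))).
    by case.
  exact: (@W_ds _ _ _ v _ (base Hom1 i)).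
split.
  split.
    move=> i x; apply: val_inj; rewrite /f mapWE.
    rewrite (push_ext (psi := fun s => s)) ?push_id; first by case: (val x).
      exact: Wfs.
    by move=> s; exact: pi_id.
  move=> i j k Hij Hjk x; apply: val_inj; rewrite /f !mapWE /= push_comp; last exact: Wfs.
  by congr pair; apply: push_ext => s; exact: pi_comp.
split.
  move=> i j Hij y0.
  pose e (g : Sset lt i) : Sset lt j := projT1 (cid (ext_ex Hom1 g Hij)).
  have He g : @pi _ _ Hom1 i j (e g) = g := projT2 (cid (ext_ex Hom1 g Hij)).
  exists (mapW v e y0); apply: val_inj; rewrite /f !mapWE /= push_comp; last exact: Wfs.
  rewrite (push_ext (psi := fun s => s)) ?push_id; first by case: (val y0).
    exact: Wfs.
  by move=> s; exact: He.
split.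
  move=> i j Hij a; apply: val_inj; rewrite /f mapWE /=.
  by rewrite push0.
split.
  move=> a b H; have := H i00; move/(congr1 (fun w => (val w).1)) => /= E.
  exact: (proj1 Hex) E.
move=> x Hx.
pose y i := (val (x i)).2.
have fsy i : fs (y i) by exact: Wfs.
have thr i j : leq_of lt i j -> push (@pi _ _ Hom1 i j) (y j) = y i.
  move=> Hij; rewrite /y -(Hx i j Hij) /f mapWE //.
have y0 := @thread_zero I lt Hom1 R N y fsy thr.
pose m i := (val (x i)).1.
have mE i j : m i = m j.
  have H i' j' : leq_of lt i' j' -> m i' = m j'.
    by move=> Hij; rewrite /m -(Hx i' j' Hij) /f mapWE.
  case: (om1_total Hom1 i j) => [Hij|[->//|Hji]].
    by apply: H; left.
  by symmetry; apply: H; left.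
have : v (m i00) = 0.
  rewrite /m -(Wss (x i00)) -/(y i00) y0; exact: ssum0.
case/(proj2 Hex) => a Ea.
exists a => i; apply: val_inj => /=.
rewrite [RHS]surjective_pairing -/(m i) -/(y i) y0 Ea; congr pair; exact: mE.
Qed.
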